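(* In the linear–quadratic example, let $(p_i)_{i\ge0}\subset[0,1]$, $Q_n=\prod_{i=0}^n(1-p_i)$, and $p^*=1-\prod_{i=0}^\infty(1-p_i)$. Define the real sequence $(\bar X^n_T)_{n\ge0}$ by $\bar X^0_T=\bar X^{\rm MFC}_T$ and $$\bar X^{n+1}_T=Q_n\,\bar X^{\rm MFC}_T+(1-Q_n)\,\tilde{\bar X}^{n+1}_T,\qquad \tilde{\bar X}^{n+1}_T=e^{-T}x_0+\tfrac12q\,\bar X^n_T\big(1-e^{-2T}\big).$$ Then: (i) if $(\bar X^n_T)_n$ converges, its limit equals $(1-p^* )\bar X^{\rm MFC}_T+p^*\,\bar X^{p^*\text{-MFG}}_T$, i.e. the terminal mean of the whole population in the $p^*$-partial mean field equilibrium; (ii) if $\big|\tfrac q2(1-e^{-2T})\big|<1$, then $(\bar X^n_T)_n$ converges as $n\to\infty$.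
   Context: Linear–quadratic example: $d=1$, $T>0$, $x_0\in\mathbb R$, $q\in\mathbb R$, $B$ a one-dimensional Brownian motion. For a square-integrable progressively measurable real control $\boldsymbol\alpha$, the state is $dX_t=\alpha_tdt+dB_t$, $X_0=x_0$. For a flow $\boldsymbol\mu$ with time-$T$ mean $\bar\mu_T$, $J(\boldsymbol\alpha;\boldsymbol\mu)=\mathbb E[\int_0^T\frac12(X_t^2+\alpha_t^2)dt+\frac12(X_T-q\bar\mu_T)^2]$. $\bar X^{\rm MFC}_T=\frac{2x_0}{e^T(1+(1-q)^2)+e^{-T}(1-(1-q)^2)}$ is the terminal mean of the (unique) MFC optimal state (MFC: minimize $J(\boldsymbol\alpha;(\mathcal L(X^{\boldsymbol\alpha}_t))_t)$). The quantity $\tilde{\bar X}^{n+1}_T$ is the terminal mean of the best response to an environment of terminal mean $\bar X^n_T$. For $p\in[0,1]$, $\bar X^{p\text{-MFG}}_T=\frac{2x_0+q(1-p)\bar X^{\rm MFC}_T(e^T-e^{-T})}{e^T(2-qp)+e^{-T}qp}$ is the terminal mean of the deviating players in the $p$-partial mean field equilibrium (a pair $(\hat{\boldsymbol\alpha}^p,p\hat{\boldsymbol\mu}^p+(1-p)\boldsymbol\mu^{\rm MFC})$ with $\hat\mu^p_t=\mathcal L(X^{\hat{\boldsymbol\alpha}^p}_t)$ and $\hat{\boldsymbol\alpha}^p$ minimizing $J(\cdot;p\hat{\boldsymbol\mu}^p+(1-p)\boldsymbol\mu^{\rm MFC})$), assuming its denominator is nonzero. *)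

(* Defs.v *)
From Stdlib Require Import Reals Lra.
From Coquelicot Require Import Coquelicot.
Open Scope R_scope.

Definition XMFC (T x0 q : R) : R :=
  2 * x0 / (exp T * (1 + (1 - q) ^ 2) + exp (- T) * (1 - (1 - q) ^ 2)).

Definition den_pMFG (T q p : R) : R := exp T * (2 - q * p) + exp (- T) * q * p.

(* Terminal mean of deviating players in the p-partial mean field equilibrium. *)
Definition XpMFG (T x0 q p : R) : R :=
  (2 * x0 + q * (1 - p) * XMFC T x0 q * (exp T - exp (- T))) / den_pMFG T q p.

Fixpoint Qprod (p : nat -> R) (n : nat) : R :=
  match n with
  | O => 1 - p O
  | S m => Qprod p m * (1 - p (S m))
  end.

(* p* = 1 - prod_{i>=0} (1 - p_i); the infinite product is the limit of the
   (nonincreasing, nonnegative, hence convergent) partial products. *)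
Definition pstar (p : nat -> R) : R := 1 - real (Lim_seq (Qprod p)).

(* Best response terminal mean to environment of terminal mean m. *)
Definition Xtilde (T x0 q m : R) : R :=
  exp (- T) * x0 + / 2 * q * m * (1 - exp (-2 * T)).

Fixpoint Xbar (T x0 q : R) (p : nat -> R) (n : nat) : R :=
  match n with
  | O => XMFC T x0 q
  | S m => Qprod p m * XMFC T x0 q
           + (1 - Qprod p m) * Xtilde T x0 q (Xbar T x0 q p m)
  end.

(* Main.v *)
Require Import Defs.
From Stdlib Require Import Reals Lra Lia.
From Coquelicot Require Import Coquelicot.
Open Scope R_scope.

Lemma contr_lemma (d e : nat -> R) (k : R) : 0 <= k < 1 -> (forall n, 0 <= d n) ->
  (forall n, d (S n) <= k * d n + e n) -> Un_cv e 0 -> Un_cv d 0.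
Proof.
  intros Hk Hd Hrec He eps Heps.
  assert (H1 : 0 < eps * (1 - k) / 2) by (apply Rmult_lt_0_compat; [apply Rmult_lt_0_compat|]; lra).
  destruct (He _ H1) as [N HN].
  assert (Hm : forall m, d (N + m)%nat <= k ^ m * d N + eps / 2).
  { induction m.
    - rewrite Nat.add_0_r; simpl; lra.
    - rewrite Nat.add_succ_r. eapply Rle_trans; [apply Hrec|].
      assert (He2 : e (N + m)%nat < eps * (1 - k) / 2).
      { specialize (HN (N + m)%nat ltac:(lia)). unfold R_dist in HN.
        rewrite Rminus_0_r in HN. apply Rabs_lt_between in HN; lra. }
      simpl. assert (k * d (N+m)%nat <= k * (k ^ m * d N + eps / 2))
        by (apply Rmult_le_compat_l; lra).
      nra. }
  assert (Hy : 0 < eps / (2 * (d N + 1))).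
  { apply Rdiv_lt_0_compat; [lra|]. specialize (Hd N); lra. }
  assert (Hka : Rabs k < 1) by (rewrite Rabs_pos_eq; lra).
  destruct (pow_lt_1_zero k Hka _ Hy) as [N2 HN2].
  exists (N + N2)%nat. intros n Hn.
  replace n with (N + (n - N))%nat by lia.
  unfold R_dist. rewrite Rminus_0_r, Rabs_pos_eq by apply Hd.
  specialize (HN2 (n - N)%nat ltac:(lia)).
  rewrite Rabs_pos_eq in HN2 by (apply pow_le; lra).
  assert (k ^ (n - N) * (d N + 1) < eps / 2).
  { apply Rmult_lt_reg_r with (/ (d N + 1)).
    - apply Rinv_0_lt_compat. specialize (Hd N); lra.
    - rewrite Rmult_assoc, Rinv_r by (specialize (Hd N); lra).
      replace (eps / 2 * / (d N + 1)) with (eps / (2 * (d N + 1))) by (field; specialize (Hd N); lra).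
      lra. }
  specialize (Hm (n - N)%nat).
  assert (0 <= k ^ (n - N)) by (apply pow_le; lra).
  nra.
Qed.

Lemma Qprod_bounds p : (forall i, 0 <= p i <= 1) -> forall n, 0 <= Qprod p n <= 1.
Proof.
  intros Hp n; induction n; simpl.
  - specialize (Hp O); lra.
  - specialize (Hp (S n)). split; nra.
Qed.

Lemma Qprod_decr p : (forall i, 0 <= p i <= 1) -> forall n, Qprod p (S n) <= Qprod p n.
Proof.
  intros Hp n. pose proof (Qprod_bounds p Hp n). specialize (Hp (S n)). simpl. nra.
Qed.

Theorem mainTheorem16 (T x0 q : R) (p : nat -> R) :
  0 < T ->
  (forall i, 0 <= p i <= 1) ->
  (den_pMFG T q (pstar p) <> 0 ->
     forall L, Un_cv (Xbar T x0 q p) L ->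
     L = (1 - pstar p) * XMFC T x0 q + pstar p * XpMFG T x0 q (pstar p))
  /\
  (Rabs (q / 2 * (1 - exp (-2 * T))) < 1 ->
     exists L, Un_cv (Xbar T x0 q p) L).
Proof.
  intros HT Hp.
  destruct (ex_finite_lim_seq_decr (Qprod p) 0 (Qprod_decr p Hp)
              (fun n => proj1 (Qprod_bounds p Hp n))) as [Qs HQs].
  assert (Hps : pstar p = 1 - Qs).
  { unfold pstar. rewrite (is_lim_seq_unique _ _ HQs). reflexivity. }
  assert (HQb : 0 <= Qs <= 1).
  { split.
    - pose proof (is_lim_seq_le (fun _ => 0) (Qprod p) 0 Qs
        (fun n => proj1 (Qprod_bounds p Hp n)) (is_lim_seq_const 0) HQs). simpl in H; exact H.
    - pose proof (is_lim_seq_le (Qprod p) (fun _ => 1) Qs 1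
        (fun n => proj2 (Qprod_bounds p Hp n)) HQs (is_lim_seq_const 1)). simpl in H; exact H. }
  set (M := XMFC T x0 q).
  set (u := exp (- T)).
  assert (Hu : 0 < u) by apply exp_pos.
  assert (HeT : exp T = / u).
  { unfold u. rewrite <- exp_Ropp, Ropp_involutive. reflexivity. }
  assert (He2 : exp (-2 * T) = u * u).
  { unfold u. rewrite <- exp_plus. f_equal. ring. }
  set (a := q / 2 * (1 - exp (-2 * T))).
  set (b := u * x0).
  set (c := fun n => 1 - Qprod p n).
  set (cs := pstar p).
  assert (Hcb : forall n, 0 <= c n <= 1).
  { intro n; unfold c; pose proof (Qprod_bounds p Hp n); lra. }
  assert (Hcsb : 0 <= cs <= 1) by (unfold cs; rewrite Hps; lra).
  assert (Hc : is_lim_seq c cs).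
  { unfold cs; rewrite Hps. unfold c.
    apply (is_lim_seq_plus' (fun _ => 1) (fun n => - Qprod p n) 1 (- Qs)).
    - apply is_lim_seq_const.
    - replace (- Qs) with ((-1) * Qs) by ring.
      apply (is_lim_seq_ext (fun n => (-1) * Qprod p n)); [intro; ring|].
      apply (is_lim_seq_mult' (fun _ => -1)); [apply is_lim_seq_const | exact HQs]. }
  assert (Hrec : forall n, Xbar T x0 q p (S n) = (1 - c n) * M + c n * (b + a * Xbar T x0 q p n)).
  { intro n. simpl. unfold Xtilde, c, a, b, u, M. unfold Rdiv. ring. }
  split.
  - intros Hden L HL.
    apply is_lim_seq_Reals in HL.
    assert (H1 : is_lim_seq (fun n => Xbar T x0 q p (S n)) L) by (apply is_lim_seq_incr_1 in HL; exact HL).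
    assert (H2 : is_lim_seq (fun n => Xbar T x0 q p (S n)) ((1 - cs) * M + cs * (b + a * L))).
    { apply (is_lim_seq_ext (fun n => (1 - c n) * M + c n * (b + a * Xbar T x0 q p n))).
      { intro n; symmetry; apply Hrec. }
      apply (is_lim_seq_plus' (fun n => (1 - c n) * M) (fun n => c n * (b + a * Xbar T x0 q p n))).
      - apply (is_lim_seq_mult' (fun n => 1 - c n) (fun _ => M)); [|apply is_lim_seq_const].
        apply (is_lim_seq_plus' (fun _ => 1) (fun n => - c n) 1 (- cs)); [apply is_lim_seq_const|].
        replace (- cs) with ((-1) * cs) by ring.
        apply (is_lim_seq_ext (fun n => (-1) * c n)); [intro; ring|].
        apply (is_lim_seq_mult' (fun _ => -1)); [apply is_lim_seq_const | exact Hc].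
      - apply (is_lim_seq_mult' c); [exact Hc|].
        apply (is_lim_seq_plus' (fun _ => b)); [apply is_lim_seq_const|].
        apply (is_lim_seq_mult' (fun _ => a)); [apply is_lim_seq_const|exact HL]. }
    pose proof (is_lim_seq_unique _ _ H1) as E1.
    rewrite (is_lim_seq_unique _ _ H2) in E1.
    injection E1 as E1.
    fold cs. fold M.
    unfold den_pMFG in Hden. fold cs in Hden. rewrite HeT in Hden. fold u in Hden.
    assert (Heq : 1 - cs * a = u / 2 * (/ u * (2 - q * cs) + u * q * cs))
      by (unfold a; rewrite He2; field; lra).
    assert (Hd : 1 - cs * a <> 0).
    { rewrite Heq. apply Rmult_integral_contrapositive. split; [|exact Hden].
      apply Rgt_not_eq, Rdiv_lt_0_compat; lra. }
    assert (HL' : L = ((1 - cs) * M + cs * b) / (1 - cs * a)).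
    { apply Rmult_eq_reg_r with (1 - cs * a); [|exact Hd].
      unfold Rdiv. rewrite Rmult_assoc, Rinv_l by exact Hd. lra. }
    rewrite HL'. unfold XpMFG, den_pMFG. fold M. rewrite HeT. fold u.
    unfold a, b in *. rewrite He2 in *.
    field. repeat split; lra.
  - intros Ha. fold a in Ha.
    assert (Hd : 0 < 1 - cs * a).
    { assert (Rabs (cs * a) < 1).
      { rewrite Rabs_mult, (Rabs_pos_eq cs) by lra.
        pose proof (Rabs_pos a). nra. }
      apply Rabs_lt_between in H. lra. }
    set (Ls := ((1 - cs) * M + cs * b) / (1 - cs * a)).
    assert (HLs : Ls * (1 - cs * a) = (1 - cs) * M + cs * b).
    { unfold Ls. field. lra. }
    exists Ls.
    set (K := Rabs (b + a * Ls - M)).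
    assert (Hcv : Un_cv (fun n => Rabs (Xbar T x0 q p n - Ls)) 0).
    { apply (contr_lemma _ (fun n => Rabs (c n - cs) * K) (Rabs a)).
      - split; [apply Rabs_pos | exact Ha].
      - intro; apply Rabs_pos.
      - intro n. rewrite Hrec.
        replace ((1 - c n) * M + c n * (b + a * Xbar T x0 q p n) - Ls)
          with (c n * a * (Xbar T x0 q p n - Ls) + (c n - cs) * (b + a * Ls - M)).
        2:{ assert (E : (1 - c n) * M + c n * (b + a * Xbar T x0 q p n) - Ls -
               (c n * a * (Xbar T x0 q p n - Ls) + (c n - cs) * (b + a * Ls - M))
               = (1 - cs) * M + cs * b - Ls * (1 - cs * a)) by ring.
            rewrite HLs in E. lra. }
        eapply Rle_trans; [apply Rabs_triang|].
        rewrite !Rabs_mult. fold K.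
        rewrite (Rabs_pos_eq (c n)) by apply Hcb.
        pose proof (Hcb n). pose proof (Rabs_pos a). pose proof (Rabs_pos (Xbar T x0 q p n - Ls)).
        assert (0 <= (1 - c n) * (Rabs a * Rabs (Xbar T x0 q p n - Ls)))
          by (apply Rmult_le_pos; [lra | apply Rmult_le_pos; lra]).
        nra.
      - apply is_lim_seq_Reals.
        replace (Finite 0) with (Finite (0 * K)) by (f_equal; ring).
        apply (is_lim_seq_mult' (fun n => Rabs (c n - cs)) (fun _ => K)); [|apply is_lim_seq_const].
        replace 0 with (Rabs 0) by apply Rabs_R0.
        apply (is_lim_seq_abs (fun n => c n - cs) 0).
        replace (Finite 0) with (Finite (cs + - cs)) by (f_equal; ring).
        apply (is_lim_seq_plus' c (fun _ => - cs)); [exact Hc | apply is_lim_seq_const]. }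
    intros eps Heps. destruct (Hcv eps Heps) as [N HN]. exists N. intros n Hn.
    specialize (HN n Hn). unfold R_dist in *. rewrite Rminus_0_r, Rabs_Rabsolu in HN. exact HN.
Qed.
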